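(* Let $X_1,X_2,X_3,X_4$ be finite discrete random variables, where $X_1$ and $X_3$ are binary with values in $\{1,2\}$ and $X_i$ takes values in $[r_i]=\{1,\dots,r_i\}$ for $i\in\{2,4\}$. Suppose that $X_1 \perp\!\!\!\perp X_3 \mid (X_2,X_4)$ and $X_2 \perp\!\!\!\perp X_4 \mid (X_1,X_3)$. Then at least one of the following is true: (1) the joint distribution lies in the closure of the graphical model $\mathcal{M}_{C_4}$; (2) there are $i\in\{2,4\}$ and sets $E,F\subseteq[r_i]$ such that (almost surely): if $(X_1,X_3)=(1,1)$ then $X_i\in E$; if $(X_1,X_3)=(1,2)$ then $X_i\in F$; if $(X_1,X_3)=(2,1)$ then $X_i\notin F$; if $(X_1,X_3)=(2,2)$ then $X_i\notin E$. Conversely, any probability distribution of $(X_1,X_2,X_3,X_4)$ that satisfies one of the statements (1) or (2) and that satisfies $X_2 \perp\!\!\!\perp X_4 \mid (X_1,X_3)$ also satisfies $X_1 \perp\!\!\!\perp X_3 \mid (X_2,X_4)$ and $X_2 \perp\!\!\!\perp X_4 \mid (X_1,X_3)$.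
   Context: $C_4$ is the four-cycle graph on vertices $\{1,2,3,4\}$ with edges $\{1,2\},\{2,3\},\{3,4\},\{1,4\}$. The graphical model $\mathcal{M}_{C_4}$ is the set of strictly positive probability distributions $p$ on $\{1,2\}\times[r_2]\times\{1,2\}\times[r_4]$ that factor as $p(x_1,x_2,x_3,x_4)=\psi_{12}(x_1,x_2)\psi_{23}(x_2,x_3)\psi_{34}(x_3,x_4)\psi_{14}(x_1,x_4)$ for some functions $\psi_{ij}$; its closure is taken in the Euclidean topology. Distributions may have zeros; conditional independence conditions only on events of positive probability. *)

(* Defs.v *)
From HB Require Import structures.
From mathcomp Require Import all_boot all_order all_algebra.
From mathcomp Require Import reals.
Set Implicit Arguments. Unset Strict Implicit. Unset Printing Implicit Defensive.
Import Order.TTheory GRing.Theory Num.Theory.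
Local Open Scope ring_scope.

(* The state 1 (resp. 2) of X1, X3 is encoded by ord 0 (resp. 1) of 'I_2;
   the state k of X2 (resp. X4) is encoded by k-1 : 'I_r2 (resp. 'I_r4). *)
Definition dist4 (R : realType) (r2 r4 : nat) :=
  'I_2 -> 'I_r2 -> 'I_2 -> 'I_r4 -> R.

Section Defs.
Variables (R : realType) (r2 r4 : nat).
Implicit Types p : dist4 R r2 r4.

Definition is_prob p : Prop :=
  (forall a b c d, 0 <= p a b c d) /\
  \sum_(a : 'I_2) \sum_(b : 'I_r2) \sum_(c : 'I_2) \sum_(d : 'I_r4) p a b c d = 1.

Definition m24 p b d := \sum_(a : 'I_2) \sum_(c : 'I_2) p a b c d.
Definition m124 p a b d := \sum_(c : 'I_2) p a b c d.
Definition m234 p b c d := \sum_(a : 'I_2) p a b c d.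
Definition m13 p a c := \sum_(b : 'I_r2) \sum_(d : 'I_r4) p a b c d.
Definition m123 p a b c := \sum_(d : 'I_r4) p a b c d.
Definition m134 p a c d := \sum_(b : 'I_r2) p a b c d.

Definition CI_13_24 p : Prop :=
  forall a b c d, 0 < m24 p b d ->
    p a b c d / m24 p b d = (m124 p a b d / m24 p b d) * (m234 p b c d / m24 p b d).

Definition CI_24_13 p : Prop :=
  forall a b c d, 0 < m13 p a c ->
    p a b c d / m13 p a c = (m123 p a b c / m13 p a c) * (m134 p a c d / m13 p a c).

Definition in_MC4 p : Prop :=
  is_prob p /\ (forall a b c d, 0 < p a b c d) /\
  exists (psi12 : 'I_2 -> 'I_r2 -> R) (psi23 : 'I_r2 -> 'I_2 -> R)
         (psi34 : 'I_2 -> 'I_r4 -> R) (psi14 : 'I_2 -> 'I_r4 -> R),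
    forall a b c d, p a b c d = psi12 a b * psi23 b c * psi34 c d * psi14 a d.

(* Euclidean closure (all norms on the finite-dimensional space agree;
   we use the sup norm) *)
Definition in_closure_MC4 p : Prop :=
  forall e : R, 0 < e -> exists q, in_MC4 q /\ forall a b c d, `|p a b c d - q a b c d| < e.

Definition o1 : 'I_2 := @Ordinal 2 0 isT.
Definition o2 : 'I_2 := @Ordinal 2 1 isT.

Definition cond2_X2 p : Prop :=
  exists E F : {set 'I_r2}, forall a b c d, 0 < p a b c d ->
    [/\ (a = o1 /\ c = o1 -> b \in E), (a = o1 /\ c = o2 -> b \in F),
        (a = o2 /\ c = o1 -> b \notin F) & (a = o2 /\ c = o2 -> b \notin E)].

Definition cond2_X4 p : Prop :=
  exists E F : {set 'I_r4}, forall a b c d, 0 < p a b c d ->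
    [/\ (a = o1 /\ c = o1 -> d \in E), (a = o1 /\ c = o2 -> d \in F),
        (a = o2 /\ c = o1 -> d \notin F) & (a = o2 /\ c = o2 -> d \notin E)].

Definition cond2 p : Prop := cond2_X2 p \/ cond2_X4 p.
End Defs.

(* Main.v *)
Require Import Defs.
From HB Require Import structures.
From mathcomp Require Import all_boot all_order all_algebra reals.
From mathcomp Require Import boolp classical_sets filter topology normedtype sequences.
From mathcomp Require Import ring lra.
Set Implicit Arguments. Unset Strict Implicit. Unset Printing Implicit Defensive.
Import Order.TTheory GRing.Theory Num.Theory.
Import numFieldNormedType.Exports.
Local Open Scope ring_scope.
Local Open Scope classical_set_scope.

Section S.
Variable R : realType.

Lemma cvg_sumr (I : Type) (r : seq I) (f : I -> nat -> R) (l : I -> R) :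
  (forall i, f i @ \oo --> l i) ->
  (fun n => \sum_(i <- r) f i n) @ \oo --> \sum_(i <- r) l i.
Proof.
move=> H; elim: r => [|i r IH].
  under eq_fun do rewrite big_nil. rewrite big_nil; exact: cvg_cst.
under eq_fun do rewrite big_cons. rewrite big_cons.
exact: cvgD.
Qed.

Definition t_ (n : nat) : R := n.+1%:R^-1.
Lemma t_gt0 n : 0 < t_ n. Proof. by rewrite /t_ invr_gt0 ltr0n. Qed.
Lemma cvg_t : t_ @ \oo --> 0.
Proof. exact: (@cvg_harmonic R). Qed.

Lemma cvg_addt (x : R) : (fun n => x + t_ n) @ \oo --> x.
Proof. rewrite -[X in _ --> X]addr0; apply: cvgD; [exact: cvg_cst|exact: cvg_t]. Qed.

Definition kk (n : nat) : R := (t_ n ^+ 2)^-1.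
Lemma kk_gt0 n : 0 < kk n. Proof. by rewrite /kk invr_gt0 exprn_gt0 // t_gt0. Qed.

Lemma gen_off (x y z : R) : 0 <= x -> 0 <= y -> 0 <= z ->
  exists X Y Z W : nat -> R, (forall n, [/\ 0 < X n, 0 < Y n, 0 < Z n & 0 < W n]) /\
   (forall n, X n * Y n = kk n * (Z n * W n)) /\
   X @ \oo --> x /\ Y @ \oo --> y /\ Z @ \oo --> z /\ W @ \oo --> (0:R).
Proof.
move=> x0 y0 z0.
exists (fun n => x + t_ n), (fun n => y + t_ n), (fun n => z + t_ n),
  (fun n => (x + t_ n) * (y + t_ n) * t_ n ^+ 2 / (z + t_ n)).
have tp := t_gt0.
split; first move=> n; first split; try by apply: ltr_pwDr.
  by apply: divr_gt0; [rewrite !mulr_gt0 ?exprn_gt0 ?ltr_pwDr|apply: ltr_pwDr].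
split; first move=> n.
  have h1 : z + t_ n != 0 by rewrite gt_eqF // ltr_pwDr.
  have h2 : t_ n != 0 by rewrite gt_eqF.
  by rewrite /kk; field; rewrite h1 h2.
split; first exact: cvg_addt.
split; first exact: cvg_addt.
split; first exact: cvg_addt.
apply: (@squeeze_cvgr _ _ _ _ (fun _ => 0) (fun n => (x + t_ n) * (y + t_ n) * t_ n)).
- apply: nearW => n; apply/andP; split.
    have t0 := ltW (tp n).
    by apply: divr_ge0; rewrite ?mulr_ge0 ?exprn_ge0 ?addr_ge0.
  have t0 := ltW (tp n).
  have key : t_ n ^+ 2 / (z + t_ n) <= t_ n.
    by rewrite ler_pdivrMr ?ltr_pwDr // expr2 ler_wpM2l // lerDr.
  rewrite -[_ * t_ n ^+ 2 / _]mulrA ler_wpM2l // mulr_ge0 // addr_ge0 //.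
- exact: cvg_cst.
- have -> : (0:R) = x * y * 0 by rewrite mulr0.
  apply: cvgM; last exact: cvg_t.
  by apply: cvgM; exact: cvg_addt.
Qed.

Lemma gen_F (x z k0 : R) : 0 <= x -> 0 <= z -> 0 < k0 ->
  exists X Y Z W : nat -> R, (forall n, [/\ 0 < X n, 0 < Y n, 0 < Z n & 0 < W n]) /\
   (forall n, X n * Y n = k0 * (Z n * W n)) /\
   X @ \oo --> x /\ Y @ \oo --> (0:R) /\ Z @ \oo --> z /\ W @ \oo --> (0:R).
Proof.
move=> x0 z0 k0p.
exists (fun n => x + t_ n), (fun n => t_ n ^+ 2), (fun n => z + t_ n),
  (fun n => (x + t_ n) * t_ n ^+ 2 / (k0 * (z + t_ n))).
have tp := t_gt0.
split; first move=> n; first split; try by apply: ltr_pwDr.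
    by rewrite exprn_gt0.
  by apply: divr_gt0; [rewrite !mulr_gt0 ?exprn_gt0 ?ltr_pwDr|rewrite mulr_gt0 ?ltr_pwDr].
split; first move=> n.
  have h1 : z + t_ n != 0 by rewrite gt_eqF // ltr_pwDr.
  have h3 : k0 != 0 by rewrite gt_eqF.
  by field; rewrite h1 h3.
split; first exact: cvg_addt.
split.
  have -> : (0:R) = 0 * 0 by rewrite mulr0.
  by apply: cvgM; exact: cvg_t.
split; first exact: cvg_addt.
apply: (@squeeze_cvgr _ _ _ _ (fun _ => 0) (fun n => (x + t_ n) * t_ n / k0)).
- apply: nearW => n; apply/andP; split.
    have t0 := ltW (tp n).
    have k00 := ltW k0p.
    by apply: divr_ge0; rewrite ?mulr_ge0 ?exprn_ge0 ?addr_ge0.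
  have t0 := ltW (tp n).
  have k00 := ltW k0p.
  have key : t_ n ^+ 2 / (z + t_ n) <= t_ n.
    by rewrite ler_pdivrMr ?ltr_pwDr // expr2 ler_wpM2l // lerDr.
  have h1 : z + t_ n != 0 by rewrite gt_eqF // ltr_pwDr.
  have h3 : k0 != 0 by rewrite gt_eqF.
  have -> : (x + t_ n) * t_ n ^+ 2 / (k0 * (z + t_ n)) = ((x + t_ n) / k0) * (t_ n ^+ 2 / (z + t_ n)).
    by field; rewrite h1 h3.
  rewrite [X in _ <= X]mulrAC ler_wpM2l // divr_ge0 // addr_ge0 //.
- exact: cvg_cst.
- have -> : (0:R) = x * 0 / k0 by rewrite mulr0 mul0r.
  apply: cvgM; last exact: cvg_cst.
  apply: cvgM; [exact: cvg_addt| exact: cvg_t].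
Qed.

Lemma ord2P (a : 'I_2) : a = o1 \/ a = o2.
Proof.
case: a => [[|[|m]] H]; [left|right|by []]; exact: val_inj.
Qed.

Definition approx (M : 'I_2 -> 'I_2 -> R) (k : nat -> R) : Prop :=
  exists M' : nat -> 'I_2 -> 'I_2 -> R,
   (forall n a c, 0 < M' n a c) /\
   (forall n, M' n o1 o1 * M' n o2 o2 = k n * (M' n o1 o2 * M' n o2 o1)) /\
   (forall a c, (fun n => M' n a c) @ \oo --> M a c).

Lemma approx_of (M : 'I_2 -> 'I_2 -> R) (k : nat -> R) (X Y Z W : nat -> R) :
  (forall n, [/\ 0 < X n, 0 < Y n, 0 < Z n & 0 < W n]) ->
  (forall n, X n * Y n = k n * (Z n * W n)) ->
  X @ \oo --> M o1 o1 -> Y @ \oo --> M o2 o2 -> Z @ \oo --> M o1 o2 ->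
  W @ \oo --> M o2 o1 -> approx M k.
Proof.
move=> pos eq cX cY cZ cW.
exists (fun n a c => if a == o1 then (if c == o1 then X n else Z n)
                    else (if c == o1 then W n else Y n)).
split; first by move=> n a c; have [] := pos n; case: (a == o1); case: (c == o1).
split; first by move=> n /=; exact: eq.
by move=> a c; case: (ord2P a) => ->; case: (ord2P c) => ->.
Qed.

Lemma approx_eqk M k k' : (forall n, k n = k' n) -> approx M k -> approx M k'.
Proof.
move=> e [M' [h1 [h2 h3]]]; exists M'; split => //; split => // n.
by rewrite -e.
Qed.

Lemma approx_off (M : 'I_2 -> 'I_2 -> R) : (forall a c, 0 <= M a c) ->
  M o1 o2 = 0 \/ M o2 o1 = 0 -> approx M kk.
Proof.
move=> M0 [] z.
- have [X [Y [Z [W [pos [eq [cX [cY [cZ cW]]]]]]]]] := gen_off (M0 o1 o1) (M0 o2 o2) (M0 o2 o1).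
  apply: (approx_of (X:=X) (Y:=Y) (Z:=W) (W:=Z)) => //.
  + by move=> n; have [] := pos n.
  + by move=> n; rewrite eq [W n * _]mulrC.
  + by rewrite z.
- have [X [Y [Z [W [pos [eq [cX [cY [cZ cW]]]]]]]]] := gen_off (M0 o1 o1) (M0 o2 o2) (M0 o1 o2).
  apply: (approx_of (X:=X) (Y:=Y) (Z:=Z) (W:=W)) => //.
  by rewrite z.
Qed.

Lemma approx_diag (M : 'I_2 -> 'I_2 -> R) : (forall a c, 0 <= M a c) ->
  M o1 o1 = 0 \/ M o2 o2 = 0 -> approx M (fun n => (kk n)^-1).
Proof.
move=> M0 [] z.
- have [X [Y [Z [W [pos [eq [cX [cY [cZ cW]]]]]]]]] := gen_off (M0 o1 o2) (M0 o2 o1) (M0 o2 o2).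
  apply: (approx_of (X:=W) (Y:=Z) (Z:=X) (W:=Y)) => //.
  + by move=> n; have [] := pos n.
  + move=> n; rewrite eq mulrA mulVf ?mul1r ?[W n * _]mulrC //.
    by rewrite gt_eqF // kk_gt0.
  + by rewrite z.
- have [X [Y [Z [W [pos [eq [cX [cY [cZ cW]]]]]]]]] := gen_off (M0 o1 o2) (M0 o2 o1) (M0 o1 o1).
  apply: (approx_of (X:=Z) (Y:=W) (Z:=X) (W:=Y)) => //.
  + by move=> n; have [] := pos n.
  + move=> n; rewrite eq mulrA mulVf ?mul1r //.
    by rewrite gt_eqF // kk_gt0.
  + by rewrite z.
Qed.

Lemma approx_C (M : 'I_2 -> 'I_2 -> R) (k0 : R) : 0 < k0 -> (forall a c, 0 <= M a c) ->
  (M o1 o1 * M o2 o2 = 0 /\ M o1 o2 * M o2 o1 = 0) \/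
  ([/\ M o1 o1 != 0, M o2 o2 != 0, M o1 o2 != 0 & M o2 o1 != 0] /\
    M o1 o1 * M o2 o2 = k0 * (M o1 o2 * M o2 o1)) ->
  approx M (fun _ => k0).
Proof.
move=> k0p M0 [[/eqP d /eqP o]|[[n11 n22 n12 n21] e]]; last first.
  have pos : forall a c, 0 < M a c.
    by move=> a c; case: (ord2P a) => ->; case: (ord2P c) => ->;
      rewrite lt_def ?n11 ?n12 ?n21 ?n22 M0.
  by apply: (approx_of (X:=fun _ => M o1 o1) (Y:=fun _ => M o2 o2)
    (Z:=fun _ => M o1 o2) (W:=fun _ => M o2 o1)) => //; try exact: cvg_cst.
move: d o; rewrite !mulf_eq0 => /orP[] /eqP d /orP[] /eqP o.
- have [X [Y [Z [W [pos [eq [cX [cY [cZ cW]]]]]]]]] := gen_F (M0 o2 o2) (M0 o2 o1) k0p.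
  apply: (approx_of (X:=Y) (Y:=X) (Z:=W) (W:=Z)) => //.
  + by move=> n; have [] := pos n.
  + by move=> n; transitivity (X n * Y n); [ring | rewrite eq; ring].
  + by rewrite d.
  + by rewrite o.
- have [X [Y [Z [W [pos [eq [cX [cY [cZ cW]]]]]]]]] := gen_F (M0 o2 o2) (M0 o1 o2) k0p.
  apply: (approx_of (X:=Y) (Y:=X) (Z:=Z) (W:=W)) => //.
  + by move=> n; have [] := pos n.
  + by move=> n; transitivity (X n * Y n); [ring | rewrite eq; ring].
  + by rewrite d.
  + by rewrite o.
- have [X [Y [Z [W [pos [eq [cX [cY [cZ cW]]]]]]]]] := gen_F (M0 o1 o1) (M0 o2 o1) k0p.
  apply: (approx_of (X:=X) (Y:=Y) (Z:=W) (W:=Z)) => //.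
  + by move=> n; have [] := pos n.
  + by move=> n; transitivity (X n * Y n); [ring | rewrite eq; ring].
  + by rewrite d.
  + by rewrite o.
- have [X [Y [Z [W [pos [eq [cX [cY [cZ cW]]]]]]]]] := gen_F (M0 o1 o1) (M0 o1 o2) k0p.
  apply: (approx_of (X:=X) (Y:=Y) (Z:=Z) (W:=W)) => //.
  + by rewrite d.
  + by rewrite o.
Qed.

Lemma cvg_sumrP (I : Type) (r : seq I) (P : pred I) (f : I -> nat -> R) (l : I -> R) :
  (forall i, f i @ \oo --> l i) ->
  (fun n => \sum_(i <- r | P i) f i n) @ \oo --> \sum_(i <- r | P i) l i.
Proof.
move=> H; rewrite big_mkcond /=.
under eq_fun do rewrite big_mkcond /=.
apply: cvg_sumr => i; case: (P i) => //; exact: cvg_cst.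
Qed.

Lemma closure_from_approx (r2 r4 : nat) (p : dist4 R r2 r4)
  (P : 'I_r2 -> 'I_2 -> 'I_2 -> R) (Q : 'I_r4 -> 'I_2 -> 'I_2 -> R) (k : nat -> R) :
  is_prob p -> (forall a b c d, p a b c d = P b a c * Q d a c) -> (forall n, k n != 0) ->
  (forall b, approx (P b) k) -> (forall d, approx (Q d) (fun n => (k n)^-1)) ->
  in_closure_MC4 p.
Proof.
move=> [p0 p1] dec kn aP aQ.
have [P' hP] := choice aP.
have [Q' hQ] := choice aQ.
pose Z n := \sum_(a : 'I_2) \sum_(b : 'I_r2) \sum_(c : 'I_2) \sum_(d : 'I_r4)
   P' b n a c * Q' d n a c.
have craw a b c d : (fun n => P' b n a c * Q' d n a c) @ \oo --> p a b c d.
  rewrite dec; apply: cvgM; [by have [_ [_ ]] := hP b | by have [_ [_ ]] := hQ d].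
have cZ : Z @ \oo --> (1:R).
  rewrite -p1; apply: cvg_sumrP => a; apply: cvg_sumrP => b; apply: cvg_sumrP => c.
  by apply: cvg_sumrP => d; exact: craw.
move=> e e0.
have H1 : \forall n \near \oo, 0 < Z n by apply: (cvgr_gt _ cZ); exact: ltr01.
have H2 : \forall n \near \oo, forall x : 'I_2 * 'I_r2 * 'I_2 * 'I_r4,
    `|p x.1.1.1 x.1.1.2 x.1.2 x.2 - P' x.1.1.2 n x.1.1.1 x.1.2 * Q' x.2 n x.1.1.1 x.1.2 / Z n| < e.
  apply: filter_forall => -[[[a b] c] d] /=.
  apply: cvgr_dist_lt => //.
  rewrite -[p a b c d]mulr1 -[X in _ * X]invr1.
  apply: cvgM; first exact: craw.
  by apply: cvgV => //; exact: oner_neq0.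
have [n [Zn Hn]] := filter_ex ((near_andP _ _ _).2 (conj H1 H2)).
exists (fun a b c d => P' b n a c * Q' d n a c / Z n); split; last first.
  by move=> a b c d; exact: (Hn (a, b, c, d)).
have posP b a c : 0 < P' b n a c by have [h _] := hP b.
have posQ d a c : 0 < Q' d n a c by have [h _] := hQ d.
split; [split|split].
- by move=> a b c d; rewrite divr_ge0 ?ltW ?mulr_gt0.
- transitivity (Z n / Z n); last by rewrite mulfV // gt_eqF.
  rewrite /Z mulr_suml; apply: eq_bigr => a _.
  rewrite mulr_suml; apply: eq_bigr => b _.
  rewrite mulr_suml; apply: eq_bigr => c _.
  by rewrite mulr_suml.
- by move=> a b c d; rewrite divr_gt0 ?mulr_gt0.
exists (fun a b => P' b n a o1), (fun b c => P' b n o1 c / P' b n o1 o1),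
  (fun c d => Q' d n o1 c / Q' d n o1 o1 / Z n), (fun a d => Q' d n a o1).
move=> a b c d.
have [_ [eP _]] := hP b; have [_ [eQ _]] := hQ d.
have nP a' c' : P' b n a' c' != 0 by rewrite gt_eqF.
have nQ a' c' : Q' d n a' c' != 0 by rewrite gt_eqF.
have nZ : Z n != 0 by rewrite gt_eqF.
have nk := kn n.
case: (ord2P a) => ->; case: (ord2P c) => ->.
- by field; rewrite nZ nP nQ.
- by field; rewrite nZ nP nQ.
- by field; rewrite nZ nP nQ.
have e1 : P' b n o2 o2 = k n * (P' b n o1 o2 * P' b n o2 o1) / P' b n o1 o1.
  by rewrite -(eP n) mulrC mulKf.
have e2 : Q' d n o2 o2 = (k n)^-1 * (Q' d n o1 o2 * Q' d n o2 o1) / Q' d n o1 o1.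
  by rewrite -(eQ n) mulrC mulKf.
rewrite e1 e2; field; by rewrite nZ nP nQ nk.
Qed.

Lemma nonF (x y z w : R) : ~ ((x = 0 \/ y = 0) /\ (z = 0 \/ w = 0)) ->
  (x != 0 /\ y != 0) \/ (z != 0 /\ w != 0).
Proof.
move=> H; case: (eqVneq x 0) => hx; case: (eqVneq y 0) => hy;
  case: (eqVneq z 0) => hz; case: (eqVneq w 0) => hw;
  try (by left); try (by right); exfalso; apply: H; tauto.
Qed.

Lemma nz4 (a b c d : R) : a != 0 -> b != 0 -> c != 0 -> d != 0 -> a * b * (c * d) != 0.
Proof. by move=> *; rewrite !mulf_neq0. Qed.

Lemma nz4E (a b c d : R) : a * b * (c * d) != 0 -> [/\ a != 0, b != 0, c != 0 & d != 0].
Proof. by rewrite !mulf_eq0 !negb_or => /andP[/andP[-> ->] /andP[-> ->]]. Qed.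

Lemma pos_of (x : R) : 0 <= x -> x != 0 -> 0 < x.
Proof. by move=> h1 h2; rewrite lt_def h2. Qed.

Section Comb.
Variables (r2 r4 : nat) (P : 'I_r2 -> 'I_2 -> 'I_2 -> R) (Q : 'I_r4 -> 'I_2 -> 'I_2 -> R).
Hypothesis P0 : forall b a c, 0 <= P b a c.
Hypothesis Q0 : forall d a c, 0 <= Q d a c.
Hypothesis rk : forall b d, (P b o1 o1 * P b o2 o2) * (Q d o1 o1 * Q d o2 o2) =
                            (P b o1 o2 * P b o2 o1) * (Q d o1 o2 * Q d o2 o1).

Definition goalk := exists k : nat -> R, (forall n, k n != 0) /\
  (forall b, approx (P b) k) /\ (forall d, approx (Q d) (fun n => (k n)^-1)).

Lemma caseC b0 d0 : [/\ P b0 o1 o1 != 0, P b0 o2 o2 != 0, P b0 o1 o2 != 0 & P b0 o2 o1 != 0] ->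
  (Q d0 o1 o1 != 0 /\ Q d0 o2 o2 != 0) \/ (Q d0 o1 o2 != 0 /\ Q d0 o2 o1 != 0) -> goalk.
Proof.
move=> [p11 p22 p12 p21] hd0.
have [q11 q22 q12 q21] : [/\ Q d0 o1 o1 != 0, Q d0 o2 o2 != 0, Q d0 o1 o2 != 0 & Q d0 o2 o1 != 0].
  have := rk b0 d0.
  case: hd0 => [[q11 q22]|[q12 q21]] e.
  - have : (P b0 o1 o2 * P b0 o2 o1) * (Q d0 o1 o2 * Q d0 o2 o1) != 0.
      by rewrite -e !mulf_neq0.
    by case/nz4E.
  - have : (P b0 o1 o1 * P b0 o2 o2) * (Q d0 o1 o1 * Q d0 o2 o2) != 0.
      by rewrite e !mulf_neq0.
    by case/nz4E.
have ndq : Q d0 o1 o1 * Q d0 o2 o2 != 0 by rewrite mulf_neq0.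
have noq : Q d0 o1 o2 * Q d0 o2 o1 != 0 by rewrite mulf_neq0.
have np0d : P b0 o1 o1 * P b0 o2 o2 != 0 by rewrite mulf_neq0.
have np0o : P b0 o1 o2 * P b0 o2 o1 != 0 by rewrite mulf_neq0.
have k0p : 0 < (P b0 o1 o1 * P b0 o2 o2) / (P b0 o1 o2 * P b0 o2 o1).
  by rewrite divr_gt0 // pos_of ?mulr_ge0.
have e0 : P b0 o1 o1 * P b0 o2 o2 = P b0 o1 o2 * P b0 o2 o1 * (Q d0 o1 o2 * Q d0 o2 o1)
    / (Q d0 o1 o1 * Q d0 o2 o2) by rewrite -rk mulfK.
exists (fun _ => (P b0 o1 o1 * P b0 o2 o2) / (P b0 o1 o2 * P b0 o2 o1)).
split; first by move=> _; rewrite gt_eqF.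
split.
  move=> b; apply: approx_C => //.
  have e := rk b d0.
  case: (eqVneq (P b o1 o1 * P b o2 o2) 0) => hd.
    left; split => //; move: e; rewrite hd mul0r => /esym/eqP.
    by rewrite mulf_eq0 (negbTE noq) orbF => /eqP.
  have hpo : P b o1 o2 * P b o2 o1 != 0.
    by apply: contra_neq hd => h; move: e; rewrite h mul0r => /eqP; rewrite mulf_eq0 (negbTE ndq) orbF => /eqP.
  right; split.
    by move: hd hpo; rewrite !mulf_eq0 !negb_or => /andP[-> ->] /andP[-> ->].
  have e' : P b o1 o1 * P b o2 o2 = P b o1 o2 * P b o2 o1 * (Q d0 o1 o2 * Q d0 o2 o1)
    / (Q d0 o1 o1 * Q d0 o2 o2) by rewrite -e mulfK.
  rewrite e' e0; field.
  by rewrite ?p11 ?p12 ?p21 ?p22 ?q11 ?q12 ?q21 ?q22.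
move=> d; apply: approx_C; first by rewrite invr_gt0.
  exact: Q0.
have e := rk b0 d.
case: (eqVneq (Q d o1 o1 * Q d o2 o2) 0) => hd.
  left; split => //; move: e; rewrite hd mulr0 => /esym/eqP.
  by rewrite mulf_eq0 (negbTE np0o) /= => /eqP.
have hqo : Q d o1 o2 * Q d o2 o1 != 0.
  by apply: contra_neq hd => h; move: e; rewrite h mulr0 => /eqP; rewrite mulf_eq0 (negbTE np0d) /= => /eqP.
right; split.
  by move: hd hqo; rewrite !mulf_eq0 !negb_or => /andP[-> ->] /andP[-> ->].
have e' : Q d o1 o1 * Q d o2 o2 = P b0 o1 o2 * P b0 o2 o1 * (Q d o1 o2 * Q d o2 o1)
    / (P b0 o1 o1 * P b0 o2 o2) by rewrite -e; field; rewrite ?p11 ?p22.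
rewrite e'; field.
by rewrite ?p11 ?p12 ?p21 ?p22 ?q11 ?q12 ?q21 ?q22.
Qed.

Lemma m0 (x y : R) : x * y = 0 -> x = 0 \/ y = 0.
Proof. by move/eqP; rewrite mulf_eq0 => /orP[/eqP|/eqP]; [left|right]. Qed.

Lemma comb b0 d0 :
  ~ ((P b0 o1 o1 = 0 \/ P b0 o2 o2 = 0) /\ (P b0 o1 o2 = 0 \/ P b0 o2 o1 = 0)) ->
  ~ ((Q d0 o1 o1 = 0 \/ Q d0 o2 o2 = 0) /\ (Q d0 o1 o2 = 0 \/ Q d0 o2 o1 = 0)) ->
  goalk.
Proof.
move=> /nonF hb /nonF hd.
case: hb => [[p11 p22]|[p12 p21]].
- have [hoff|[p12 p21]] : (P b0 o1 o2 = 0 \/ P b0 o2 o1 = 0) \/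
      (P b0 o1 o2 != 0 /\ P b0 o2 o1 != 0).
    by case: (eqVneq (P b0 o1 o2) 0) => h1; case: (eqVneq (P b0 o2 o1) 0) => h2; [by left; left|by left; left|by left; right|by right].
  + have hQd d : Q d o1 o1 = 0 \/ Q d o2 o2 = 0.
      by have := rk b0 d; case: hoff => ->; rewrite ?(mul0r, mulr0) => /m0 [/m0 [] /eqP|/m0 //];
        rewrite ?(negbTE p11) ?(negbTE p22).
    have [q12 q21] : Q d0 o1 o2 != 0 /\ Q d0 o2 o1 != 0.
      by case: hd => // -[q11 q22]; case: (hQd d0) => /eqP; rewrite ?(negbTE q11) ?(negbTE q22).
    have hPo b : P b o1 o2 = 0 \/ P b o2 o1 = 0.
      by have := rk b d0; case: (hQd d0) => ->; rewrite ?(mul0r, mulr0) => /esym/m0 [/m0 //|/m0 [] /eqP];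
        rewrite ?(negbTE q12) ?(negbTE q21).
    exists kk; split; first by move=> n; rewrite gt_eqF // kk_gt0.
    split=> [b|d]; [exact: approx_off | exact: approx_diag].
  + apply: (caseC (b0 := b0) (d0 := d0)) => //.
- have [hdg|[p11 p22]] : (P b0 o1 o1 = 0 \/ P b0 o2 o2 = 0) \/
      (P b0 o1 o1 != 0 /\ P b0 o2 o2 != 0).
    by case: (eqVneq (P b0 o1 o1) 0) => h1; case: (eqVneq (P b0 o2 o2) 0) => h2; [by left; left|by left; left|by left; right|by right].
  + have hQo d : Q d o1 o2 = 0 \/ Q d o2 o1 = 0.
      by have := rk b0 d; case: hdg => ->; rewrite ?(mul0r, mulr0) => /esym/m0 [/m0 [] /eqP|/m0 //];
        rewrite ?(negbTE p12) ?(negbTE p21).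
    have [q11 q22] : Q d0 o1 o1 != 0 /\ Q d0 o2 o2 != 0.
      by case: hd => // -[q12 q21]; case: (hQo d0) => /eqP; rewrite ?(negbTE q12) ?(negbTE q21).
    have hPd b : P b o1 o1 = 0 \/ P b o2 o2 = 0.
      by have := rk b d0; case: (hQo d0) => ->; rewrite ?(mul0r, mulr0) => /m0 [/m0 //|/m0 [] /eqP];
        rewrite ?(negbTE q11) ?(negbTE q22).
    exists (fun n => (kk n)^-1); split; first by move=> n; rewrite invr_eq0 gt_eqF // kk_gt0.
    split=> [b|d]; first exact: approx_diag.
    apply: (approx_eqk (k := kk)); first by move=> n; rewrite invrK.
    exact: approx_off.
  + apply: (caseC (b0 := b0) (d0 := d0)) => //.
Qed.
End Comb.

Lemma sum2 (F : 'I_2 -> R) : \sum_(i : 'I_2) F i = F o1 + F o2.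
Proof.
rewrite big_ord_recl big_ord1.
have -> : lift ord0 ord0 = o2 :> 'I_2 by apply: val_inj.
by have -> : ord0 = o1 :> 'I_2 by apply: val_inj.
Qed.

Lemma div_id (x r s m : R) : m != 0 -> x * m = r * s -> x / m = (r / m) * (s / m).
Proof. by move=> mn h; rewrite mulf_div -h; field. Qed.

Lemma id_div (x r s m : R) : m != 0 -> x / m = (r / m) * (s / m) -> x * m = r * s.
Proof. by move=> mn h; rewrite -(divfK mn x) h; field. Qed.

Lemma zero_or_pos (x : R) : 0 <= x -> x = 0 \/ 0 < x.
Proof. by rewrite le_eqVlt => /orP[/eqP ->|]; [left|right]. Qed.

Lemma cond_gen (n : nat) (M : 'I_n -> 'I_2 -> 'I_2 -> R) :
  (forall i, (M i o1 o1 = 0 \/ M i o2 o2 = 0) /\ (M i o1 o2 = 0 \/ M i o2 o1 = 0)) ->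
  exists E F : {set 'I_n}, forall i a c, M i a c != 0 ->
    [/\ (a = o1 /\ c = o1 -> i \in E), (a = o1 /\ c = o2 -> i \in F),
        (a = o2 /\ c = o1 -> i \notin F) & (a = o2 /\ c = o2 -> i \notin E)].
Proof.
move=> HF; exists (finset (fun i => M i o2 o2 == 0)), (finset (fun i => M i o2 o1 == 0)).
move=> i a c nz; split; move=> [ha hc]; subst a c; rewrite inE //.
- by case: (HF i) => -[h|->] _ //; rewrite h eqxx in nz.
- by case: (HF i) => _ [h|->] //; rewrite h eqxx in nz.
Qed.

Lemma cond_rank (T : finType) (E F : {set T}) (i : T) (N : 'I_2 -> 'I_2 -> R) :
  (forall a c, 0 <= N a c) ->
  (forall a c, 0 < N a c -> [/\ (a = o1 /\ c = o1 -> i \in E), (a = o1 /\ c = o2 -> i \in F),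
        (a = o2 /\ c = o1 -> i \notin F) & (a = o2 /\ c = o2 -> i \notin E)]) ->
  N o1 o1 * N o2 o2 = N o1 o2 * N o2 o1.
Proof.
move=> N0 H.
have L : N o1 o1 * N o2 o2 = 0.
  case: (zero_or_pos (N0 o1 o1)) => [->|h1]; first by rewrite mul0r.
  case: (zero_or_pos (N0 o2 o2)) => [->|h2]; first by rewrite mulr0.
  have [e1 _ _ _] := H _ _ h1; have [_ _ _ e2] := H _ _ h2.
  by move: (e1 (conj erefl erefl)) (e2 (conj erefl erefl)) => ->.
have R0 : N o1 o2 * N o2 o1 = 0.
  case: (zero_or_pos (N0 o1 o2)) => [->|h1]; first by rewrite mul0r.
  case: (zero_or_pos (N0 o2 o1)) => [->|h2]; first by rewrite mulr0.
  have [_ e1 _ _] := H _ _ h1; have [_ _ e2 _] := H _ _ h2.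
  by move: (e1 (conj erefl erefl)) (e2 (conj erefl erefl)) => ->.
by rewrite L R0.
Qed.

Section P.
Variables (r2 r4 : nat) (p : dist4 R r2 r4).
Hypothesis p0 : forall a b c d, 0 <= p a b c d.

Definition rank1 := forall b d, p o1 b o1 d * p o2 b o2 d = p o1 b o2 d * p o2 b o1 d.

Lemma rank1_CI : rank1 -> CI_13_24 p.
Proof.
move=> rk a b c d; rewrite /m24 /m124 /m234 !sum2 => mpos.
apply: div_id; first by rewrite gt_eqF.
have := rk b d.
by case: (ord2P a) => ->; case: (ord2P c) => -> h; lra.
Qed.

Lemma CI_rank1 : CI_13_24 p -> rank1.
Proof.
move=> ci b d.
have := ci; rewrite /CI_13_24 /m24 /m124 /m234 => {}ci.
have hm : 0 <= \sum_(a : 'I_2) \sum_(c : 'I_2) p a b c d.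
  by apply: sumr_ge0 => a _; apply: sumr_ge0.
case: (zero_or_pos hm) => h.
  move: h; rewrite !sum2 => h.
  have := p0 o1 b o1 d; have := p0 o1 b o2 d; have := p0 o2 b o1 d; have := p0 o2 b o2 d.
  move=> h1 h2 h3 h4.
  have z1 : p o1 b o1 d = 0 by lra.
  have z2 : p o2 b o2 d = 0 by lra.
  have z3 : p o1 b o2 d = 0 by lra.
  by rewrite z1 z3 !mul0r.
have e a c := id_div (negbT (gt_eqF h)) (ci a b c d h).
move: e h; rewrite !sum2 => e h.
set m := _ + _ in e h.
have mn : m * m != 0 by rewrite mulf_neq0 // gt_eqF.
apply: (mulIf mn).
transitivity ((p o1 b o1 d * m) * (p o2 b o2 d * m)); first ring.
rewrite (e o1 o1) (e o2 o2).
transitivity ((p o1 b o2 d * m) * (p o2 b o1 d * m)); last ring.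
by rewrite (e o1 o2) (e o2 o1); ring.
Qed.

Definition Pm (b : 'I_r2) (a c : 'I_2) := m123 p a b c.
Definition Qm (d : 'I_r4) (a c : 'I_2) := m134 p a c d / m13 p a c.

Lemma Pm0 b a c : 0 <= Pm b a c.
Proof. by apply: sumr_ge0. Qed.

Lemma Qm0 d a c : 0 <= Qm d a c.
Proof.
by apply: divr_ge0; [apply: sumr_ge0 | apply: sumr_ge0 => ? _; apply: sumr_ge0].
Qed.

Lemma decP : CI_24_13 p -> forall a b c d, p a b c d = Pm b a c * Qm d a c.
Proof.
move=> ci a b c d; rewrite /Pm /Qm.
have hm : 0 <= m13 p a c by apply: sumr_ge0 => ? _; apply: sumr_ge0.
case: (zero_or_pos hm) => h.
  rewrite h invr0 !mulr0.
  move: h => /eqP; rewrite /m13 psumr_eq0; last by move=> ? _; apply: sumr_ge0.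
  move=> /allP /(_ b) /=; rewrite mem_index_enum => /(_ isT).
  rewrite psumr_eq0 // => /allP /(_ d) /=; rewrite mem_index_enum => /(_ isT).
  by move/eqP.
have := id_div (negbT (gt_eqF h)) (ci a b c d h).
by move=> e; rewrite -(mulfK (negbT (gt_eqF h)) (p a b c d)) e mulrA.
Qed.

Lemma closure_rank1 : in_closure_MC4 p -> rank1.
Proof.
move=> cl b d.
have [q hq] := choice (fun n : nat => cl (t_ n) (t_gt0 n)).
have cq a b' c d' : (fun n => q n a b' c d') @ \oo --> p a b' c d'.
  apply: (squeeze_cvgr (f := fun n => p a b' c d' - t_ n) (h := fun n => p a b' c d' + t_ n)).
  - apply: nearW => n; have [_ h] := hq n; have := h a b' c d'.
    rewrite ltr_distl => /andP[h1 h2]; apply/andP; split; lra.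
  - rewrite -[X in _ --> X]subr0; apply: cvgB; [exact: cvg_cst | exact: cvg_t].
  - exact: cvg_addt.
apply/eqP; rewrite -subr_eq0; apply/eqP.
set g := _ - _.
have cG : (fun n => q n o1 b o1 d * q n o2 b o2 d - q n o1 b o2 d * q n o2 b o1 d) @ \oo --> g.
  by apply: cvgB; apply: cvgM; apply: cq.
have G0 n : q n o1 b o1 d * q n o2 b o2 d - q n o1 b o2 d * q n o2 b o1 d = 0.
  have [[_ [_ [f1 [f2 [f3 [f4 hf]]]]]] _] := hq n.
  by rewrite !hf; ring.
case: (eqVneq g 0) => // gn; exfalso.
have gpos : 0 < `|g| by rewrite normr_gt0.
have [n hn] := filter_ex (@cvgr_dist_lt _ _ _ _ _ _ _ cG _ gpos).
by move: hn; rewrite G0 subr0 ltxx.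
Qed.

Lemma cond2_rank1 : cond2 p -> rank1.
Proof.
move=> [[E [F H]]|[E [F H]]] b d.
- apply: (cond_rank (E:=E) (F:=F) (i:=b) (N := fun a c => p a b c d)) => // a c hp.
  exact: (H _ _ _ _ hp).
- apply: (cond_rank (E:=E) (F:=F) (i:=d) (N := fun a c => p a b c d)) => // a c hp.
  exact: (H _ _ _ _ hp).
Qed.

Lemma ncond_b : CI_24_13 p -> ~ cond2_X2 p -> exists b0,
  ~ ((Pm b0 o1 o1 = 0 \/ Pm b0 o2 o2 = 0) /\ (Pm b0 o1 o2 = 0 \/ Pm b0 o2 o1 = 0)).
Proof.
move=> ci nc; case: (EM (exists b0,
  ~ ((Pm b0 o1 o1 = 0 \/ Pm b0 o2 o2 = 0) /\ (Pm b0 o1 o2 = 0 \/ Pm b0 o2 o1 = 0)))) => // hne.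
exfalso; apply: nc.
have HF : forall b, (Pm b o1 o1 = 0 \/ Pm b o2 o2 = 0) /\ (Pm b o1 o2 = 0 \/ Pm b o2 o1 = 0).
  by move=> b; case: (EM ((Pm b o1 o1 = 0 \/ Pm b o2 o2 = 0) /\ (Pm b o1 o2 = 0 \/ Pm b o2 o1 = 0))) => // h;
    exfalso; apply: hne; exists b.
have [E [F H]] := cond_gen HF.
exists E, F => a b c d hp; apply: H.
by apply: contraTneq hp => h; rewrite (decP ci) h mul0r ltxx.
Qed.

Lemma ncond_d : CI_24_13 p -> ~ cond2_X4 p -> exists d0,
  ~ ((Qm d0 o1 o1 = 0 \/ Qm d0 o2 o2 = 0) /\ (Qm d0 o1 o2 = 0 \/ Qm d0 o2 o1 = 0)).
Proof.
move=> ci nc; case: (EM (exists d0,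
  ~ ((Qm d0 o1 o1 = 0 \/ Qm d0 o2 o2 = 0) /\ (Qm d0 o1 o2 = 0 \/ Qm d0 o2 o1 = 0)))) => // hne.
exfalso; apply: nc.
have HF : forall d, (Qm d o1 o1 = 0 \/ Qm d o2 o2 = 0) /\ (Qm d o1 o2 = 0 \/ Qm d o2 o1 = 0).
  by move=> d; case: (EM ((Qm d o1 o1 = 0 \/ Qm d o2 o2 = 0) /\ (Qm d o1 o2 = 0 \/ Qm d o2 o1 = 0))) => // h;
    exfalso; apply: hne; exists d.
have [E [F H]] := cond_gen HF.
exists E, F => a b c d hp; apply: H.
by apply: contraTneq hp => h; rewrite (decP ci) h mulr0 ltxx.
Qed.

End P.
End S.

Theorem corollary4p5 (R : realType) (r2 r4 : nat) (p : dist4 R r2 r4) :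
  is_prob p ->
  ((CI_13_24 p /\ CI_24_13 p -> in_closure_MC4 p \/ cond2 p) /\
   ((in_closure_MC4 p \/ cond2 p) -> CI_24_13 p -> CI_13_24 p /\ CI_24_13 p)).
Proof.
move=> hp; have p0 := hp.1; split.
  move=> [ci1 ci2].
  case: (EM (cond2 p)) => [h|nc]; [by right|left].
  have [b0 hb0] := ncond_b p0 ci2 (fun h => nc (or_introl h)).
  have [d0 hd0] := ncond_d p0 ci2 (fun h => nc (or_intror h)).
  have rk : forall b d, (Pm p b o1 o1 * Pm p b o2 o2) * (Qm p d o1 o1 * Qm p d o2 o2) =
                        (Pm p b o1 o2 * Pm p b o2 o1) * (Qm p d o1 o2 * Qm p d o2 o1).
    move=> b d; have := CI_rank1 p0 ci1 b d; rewrite !(decP p0 ci2) => h.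
    transitivity (Pm p b o1 o1 * Qm p d o1 o1 * (Pm p b o2 o2 * Qm p d o2 o2)); first ring.
    by rewrite h; ring.
  have [k [kn [aP aQ]]] := comb (@Pm0 _ _ _ p p0) (@Qm0 _ _ _ p p0) rk hb0 hd0.
  exact: (closure_from_approx hp (decP p0 ci2) kn aP aQ).
move=> h ci2; split => //.
apply: rank1_CI => //.
by case: h; [exact: closure_rank1 | exact: cond2_rank1].
Qed.
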